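(* Let $N\to\infty$ and let $h=h(N)$ satisfy $h\to\infty$ and $h=o(N)$ as $N\to\infty$. Let $f_1,f_2:\mathbb{N}\to\mathbb{R}$ satisfy, for every $\varepsilon>0$, $f_1(n),f_2(n)\ll_{\varepsilon}N^{\varepsilon}$ uniformly for $n\ll N$. Then for every $\varepsilon>0$, $$I_{f_1,f_2}(N,h)=\sum_{a}W(a)\,\mathcal{C}_{f_1,f_2}(a)+O_{\varepsilon}(N^{\varepsilon}h^3),$$ where the sum is over integers $a\in[-2h,2h]$.
   Context: For $r\ne0$, $\mathrm{sgn}(r)=|r|/r$, and $\mathrm{sgn}(0)=0$. The mixed symmetry integral is $$I_{f_1,f_2}(N,h)=\int_h^N\Big(\sum_{|n-x|\le h}f_1(n)\,\mathrm{sgn}(n-x)\Big)\Big(\sum_{|m-x|\le h}f_2(m)\,\mathrm{sgn}(m-x)\Big)\,dx.$$ For integers $a\in[-2h,2h]$, the mixed correlation is $\mathcal{C}_{f_1,f_2}(a)=\sum_{|a|<n\le N-|a|}f_1(n)f_2(n-a)$, and the weight is $W(a)=\max(2h-3|a|,\,|a|-2h)$; $W$ is supported in $[-2h,2h]$. *)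

(* Defs.v *)
From Stdlib Require Import Reals ZArith List.
From Coquelicot Require Import Coquelicot.
Open Scope R_scope.

Definition sgn (r : R) : R :=
  if Rlt_dec 0 r then 1 else if Rlt_dec r 0 then -1 else 0.

Definition sum_nat (M : nat) (F : nat -> R) : R :=
  fold_right Rplus 0 (map F (seq 0 M)).

Definition sum_Z (lo hi : Z) (F : Z -> R) : R :=
  fold_right Rplus 0
    (map (fun k => F (lo + Z.of_nat k)%Z) (seq 0 (Z.to_nat (hi - lo + 1)))).

(* \sum_{n in N, |n - x| <= h} f(n) sgn(n - x).  All such n satisfy
   n <= x + h < up (x + h), so the range 0 .. Z.to_nat (up (x+h)) suffices. *)
Definition window_sum (f : nat -> R) (x h : R) : R :=
  sum_nat (S (Z.to_nat (up (x + h))))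
    (fun n => if Rle_dec (Rabs (INR n - x)) h
              then f n * sgn (INR n - x) else 0).

Definition Isym (f1 f2 : nat -> R) (N : nat) (h : R) : R :=
  RInt (fun x => window_sum f1 x h * window_sum f2 x h) h (INR N).

Definition Corr (f1 f2 : nat -> R) (N : nat) (a : Z) : R :=
  sum_nat (S N)
    (fun n => if (Z.ltb (Z.abs a) (Z.of_nat n) && Z.leb (Z.of_nat n) (Z.of_nat N - Z.abs a))%bool
              then f1 n * f2 (Z.to_nat (Z.of_nat n - a)) else 0).

Definition Wt (h : R) (a : Z) : R :=
  Rmax (2 * h - 3 * Rabs (IZR a)) (Rabs (IZR a) - 2 * h).

Definition main_term (f1 f2 : nat -> R) (N : nat) (h : R) : R :=
  sum_Z (- Int_part (2 * h))%Z (Int_part (2 * h)) (fun a => Wt h a * Corr f1 f2 N a).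

(* f(n) <<_eps N^eps uniformly for n << N *)
Definition small_growth (f : nat -> R) : Prop :=
  forall eps C : R, 0 < eps -> 0 < C ->
    exists K : R, forall (N n : nat), (1 <= N)%nat -> INR n <= C * INR N ->
      Rabs (f n) <= K * Rpower (INR N) eps.

(* Main.v *)
Require Import Defs.
From Stdlib Require Import Reals ZArith List Lia Lra.
From Coquelicot Require Import Coquelicot.
Import Defs.
Open Scope R_scope.

Lemma fold_plus_c (l : list R) c : fold_right Rplus c l = fold_right Rplus 0 l + c.
Proof. induction l; simpl; [lra| rewrite IHl; lra]. Qed.

Lemma sum_nat_0 (F:nat->R) : sum_nat O F = 0.
Proof. reflexivity. Qed.

Lemma sum_nat_S M (F : nat -> R) : sum_nat (S M) F = sum_nat M F + F M.
Proof.
  unfold sum_nat. rewrite seq_S, map_app, fold_right_app. simpl.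
  rewrite fold_plus_c. lra.
Qed.

Lemma sum_nat_ext M (F : nat -> R) G : (forall i, (i < M)%nat -> F i = G i) -> sum_nat M F = sum_nat M G.
Proof.
  induction M; intros H; [reflexivity|].
  rewrite !sum_nat_S, IHM, H. reflexivity. lia. intros; apply H; lia.
Qed.

Lemma sum_nat_plus M (F : nat -> R) G : sum_nat M (fun i => F i + G i) = sum_nat M F + sum_nat M G.
Proof. induction M; [rewrite !sum_nat_0; lra|]. rewrite !sum_nat_S, IHM; lra. Qed.

Lemma sum_nat_minus M (F : nat -> R) G : sum_nat M (fun i => F i - G i) = sum_nat M F - sum_nat M G.
Proof. induction M; [rewrite !sum_nat_0; lra|]. rewrite !sum_nat_S, IHM; lra. Qed.

Lemma sum_nat_scal M c (F : nat -> R) : sum_nat M (fun i => c * F i) = c * sum_nat M F.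
Proof. induction M; [rewrite !sum_nat_0; lra|]. rewrite !sum_nat_S, IHM; lra. Qed.

Lemma sum_nat_zero M (F : nat -> R) : (forall i, (i < M)%nat -> F i = 0) -> sum_nat M F = 0.
Proof.
  intros H. rewrite (sum_nat_ext M F (fun _ => 0)) by auto.
  induction M; [reflexivity|]. rewrite sum_nat_S, IHM; [lra|]. intros; apply H; lia.
Qed.

Lemma sum_nat_split a b (F : nat -> R) :
  sum_nat (a + b) F = sum_nat a F + sum_nat b (fun i => F (a + i)%nat).
Proof.
  induction b. rewrite Nat.add_0_r, sum_nat_0; lra.
  rewrite Nat.add_succ_r, !sum_nat_S, IHb; lra.
Qed.

Lemma sum_nat_Sl M (F : nat -> R) : sum_nat (S M) F = F O + sum_nat M (fun i => F (S i)).
Proof.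
  replace (S M) with (1 + M)%nat by lia. rewrite sum_nat_split. simpl.
  unfold sum_nat at 1. simpl. lra.
Qed.

Lemma sum_nat_rev M (F : nat -> R) : sum_nat M F = sum_nat M (fun i => F (M - 1 - i)%nat).
Proof.
  induction M. reflexivity.
  rewrite sum_nat_S, sum_nat_Sl, IHM.
  replace (S M - 1 - 0)%nat with M by lia.
  rewrite (sum_nat_ext M (fun i => F (S M - 1 - S i)%nat) (fun i => F (M - 1 - i)%nat)).
  lra. intros; f_equal; lia.
Qed.

Lemma sum_nat_swap M K (G : nat -> nat -> R) :
  sum_nat M (fun i => sum_nat K (fun j => G i j)) = sum_nat K (fun j => sum_nat M (fun i => G i j)).
Proof.
  induction M. simpl. symmetry; apply sum_nat_zero; auto.
  rewrite sum_nat_S, IHM.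
  rewrite <- sum_nat_plus. apply sum_nat_ext; intros. rewrite sum_nat_S. lra.
Qed.

Lemma sum_nat_abs_le M (F : nat -> R) E : (forall i, (i < M)%nat -> Rabs (F i) <= E i) ->
  Rabs (sum_nat M F) <= sum_nat M E.
Proof.
  induction M; intros H. rewrite !sum_nat_0, Rabs_R0; lra.
  rewrite !sum_nat_S. eapply Rle_trans; [apply Rabs_triang|].
  apply Rplus_le_compat; [apply IHM; intros; apply H; lia| apply H; lia].
Qed.

Definition wind (s w m : nat) : R := if andb (s <=? m)%nat (m <? s + w)%nat then 1 else 0.

Lemma sum_wind M s w : sum_nat M (wind s w) = INR (Nat.min M (s + w) - s).
Proof.
  induction M. rewrite sum_nat_0. reflexivity.
  rewrite sum_nat_S, IHM. unfold wind.
  destruct (Nat.le_gt_cases s M) as [E1|E1]; destruct (Nat.lt_ge_cases M (s + w)) as [E2|E2].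
  - rewrite (proj2 (Nat.leb_le _ _) E1), (proj2 (Nat.ltb_lt _ _) E2). simpl andb.
    replace (Nat.min (S M) (s + w) - s)%nat with (S (Nat.min M (s + w) - s)) by lia.
    rewrite S_INR; lra.
  - rewrite (proj2 (Nat.ltb_ge _ _) E2), Bool.andb_false_r.
    replace (Nat.min (S M) (s + w) - s)%nat with (Nat.min M (s + w) - s)%nat by lia. lra.
  - rewrite (proj2 (Nat.leb_gt _ _) E1). simpl andb.
    replace (Nat.min (S M) (s + w) - s)%nat with (Nat.min M (s + w) - s)%nat by lia. lra.
  - rewrite (proj2 (Nat.leb_gt _ _) E1). simpl andb.
    replace (Nat.min (S M) (s + w) - s)%nat with (Nat.min M (s + w) - s)%nat by lia. lra.
Qed.

Lemma sum_wind_le M s w : sum_nat M (wind s w) <= INR w.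
Proof. rewrite sum_wind. apply le_INR. lia. Qed.

Lemma wind_ge0 s w m : 0 <= wind s w m.
Proof. unfold wind; destruct (andb _ _); lra. Qed.

Lemma isR_ext (f g : R -> R) a b l l' : (forall x, Rmin a b < x < Rmax a b -> f x = g x) -> l = l' ->
  is_RInt f a b l -> is_RInt g a b l'.
Proof. intros H1 <- H. exact (is_RInt_ext f g a b l H1 H). Qed.

Lemma isR_const a b (v : R) : is_RInt (fun _ => v) a b ((b - a) * v).
Proof. exact (is_RInt_const a b v). Qed.

Lemma isR_chasles (f : R -> R) a b c l1 l2 : is_RInt f a b l1 -> is_RInt f b c l2 -> is_RInt f a c (l1 + l2).
Proof. intros H1 H2. exact (is_RInt_Chasles f a b c l1 l2 H1 H2). Qed.

Lemma isR_plus (f g : R -> R) a b l1 l2 : is_RInt f a b l1 -> is_RInt g a b l2 ->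
  is_RInt (fun x => f x + g x) a b (l1 + l2).
Proof. intros H1 H2. exact (is_RInt_plus f g a b l1 l2 H1 H2). Qed.

Lemma isR_scal (f : R -> R) a b k l : is_RInt f a b l -> is_RInt (fun x => k * f x) a b (k * l).
Proof. intros H1. exact (is_RInt_scal f a b k l H1). Qed.

Definition ind (u : R -> R) c d := forall x, (c < x < d -> u x = 1) /\ ((x < c \/ d < x) -> u x = 0).

Lemma int_ind u c d A B : A <= B -> ind u c d -> is_RInt u A B (Rmax 0 (Rmin d B - Rmax c A)).
Proof.
  intros HAB Hu.
  assert (Hc : c <= Rmax c A) by apply Rmax_l.
  assert (HA : A <= Rmax c A) by apply Rmax_r.
  assert (Hd : Rmin d B <= d) by apply Rmin_l.
  assert (HB : Rmin d B <= B) by apply Rmin_r.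
  assert (Hlo : Rmax c A = c \/ Rmax c A = A) by (unfold Rmax; destruct Rle_dec; auto).
  assert (Hhi : Rmin d B = d \/ Rmin d B = B) by (unfold Rmin; destruct Rle_dec; auto).
  set (lo := Rmax c A) in *. set (hi := Rmin d B) in *.
  destruct (Rle_lt_dec lo hi) as [Hlh|Hlh].
  - rewrite Rmax_right by lra.
    replace (hi - lo) with (0 + (hi - lo) + 0) by lra.
    apply isR_chasles with hi; [apply isR_chasles with lo|].
    + eapply isR_ext; [| |apply (isR_const A lo 0)]; [|lra].
      intros x Hx. rewrite Rmin_left in Hx by lra. rewrite Rmax_right in Hx by lra.
      symmetry; apply Hu. left. lra.
    + eapply isR_ext; [| |apply (isR_const lo hi 1)]; [|lra].
      intros x Hx. rewrite Rmin_left in Hx by lra. rewrite Rmax_right in Hx by lra.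
      symmetry; apply Hu. lra.
    + eapply isR_ext; [| |apply (isR_const hi B 0)]; [|lra].
      intros x Hx. rewrite Rmin_left in Hx by lra. rewrite Rmax_right in Hx by lra.
      symmetry; apply Hu. right. lra.
  - rewrite Rmax_left by lra.
    eapply isR_ext; [| |apply (isR_const A B 0)]; [|lra].
    intros x Hx. rewrite Rmin_left in Hx by lra. rewrite Rmax_right in Hx by lra.
    symmetry; apply Hu. lra.
Qed.

Lemma ind_mult u1 u2 c1 d1 c2 d2 : ind u1 c1 d1 -> ind u2 c2 d2 ->
  ind (fun x => u1 x * u2 x) (Rmax c1 c2) (Rmin d1 d2).
Proof.
  intros H1 H2 x.
  assert (c1 <= Rmax c1 c2) by apply Rmax_l. assert (c2 <= Rmax c1 c2) by apply Rmax_r.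
  assert (Rmin d1 d2 <= d1) by apply Rmin_l. assert (Rmin d1 d2 <= d2) by apply Rmin_r.
  assert (Rmax c1 c2 = c1 \/ Rmax c1 c2 = c2) by (unfold Rmax; destruct Rle_dec; auto).
  assert (Rmin d1 d2 = d1 \/ Rmin d1 d2 = d2) by (unfold Rmin; destruct Rle_dec; auto).
  split; intros Hx.
  - rewrite (proj1 (H1 x)), (proj1 (H2 x)) by lra. lra.
  - destruct (Rlt_dec x c1) as [?|?]. rewrite (proj2 (H1 x)) by lra; lra.
    destruct (Rlt_dec d1 x) as [?|?]. rewrite (proj2 (H1 x)) by lra; lra.
    rewrite (proj2 (H2 x)) by lra; lra.
Qed.

Definition phi (H : R) (n : nat) (x : R) :=
  if Rle_dec (Rabs (INR n - x)) H then sgn (INR n - x) else 0.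
Definition Pp (H : R) (n : nat) (x : R) :=
  if Rle_dec (Rabs (INR n - x)) H then (if Rlt_dec 0 (INR n - x) then 1 else 0) else 0.
Definition Qq (H : R) (n : nat) (x : R) :=
  if Rle_dec (Rabs (INR n - x)) H then (if Rlt_dec (INR n - x) 0 then 1 else 0) else 0.

Lemma phi_PQ H n x : phi H n x = Pp H n x - Qq H n x.
Proof.
  unfold phi, Pp, Qq, sgn. destruct Rle_dec; [|lra].
  destruct (Rlt_dec 0 _); destruct (Rlt_dec _ 0); lra.
Qed.

Lemma ind_P H n : ind (Pp H n) (INR n - H) (INR n).
Proof.
  intros x; unfold Pp; split; intros Hx.
  - destruct Rle_dec as [?|n0]. destruct Rlt_dec; [lra|lra].
    exfalso; apply n0. rewrite Rabs_right by lra. lra.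
  - destruct Rle_dec as [r|?]; [|lra]. destruct Rlt_dec; [|lra].
    exfalso. rewrite Rabs_right in r by lra. lra.
Qed.

Lemma ind_Q H n : ind (Qq H n) (INR n) (INR n + H).
Proof.
  intros x; unfold Qq; split; intros Hx.
  - destruct Rle_dec as [?|n0]. destruct Rlt_dec; [lra|lra].
    exfalso; apply n0. rewrite Rabs_left by lra. lra.
  - destruct Rle_dec as [r|?]; [|lra]. destruct Rlt_dec; [|lra].
    exfalso. rewrite Rabs_left in r by lra. lra.
Qed.

Definition ov A B c1 d1 c2 d2 := Rmax 0 (Rmin (Rmin d1 d2) B - Rmax (Rmax c1 c2) A).
Definition Jv A B H p q :=
  ov A B (p - H) p (q - H) q - ov A B (p - H) p q (q + H)
  - ov A B p (p + H) (q - H) q + ov A B p (p + H) q (q + H).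

Lemma int_ov u1 u2 c1 d1 c2 d2 A B : A <= B -> ind u1 c1 d1 -> ind u2 c2 d2 ->
  is_RInt (fun x => u1 x * u2 x) A B (ov A B c1 d1 c2 d2).
Proof. intros. apply int_ind; auto. apply ind_mult; auto. Qed.

Lemma J_int A B H n m : A <= B ->
  is_RInt (fun x => phi H n x * phi H m x) A B (Jv A B H (INR n) (INR m)).
Proof.
  intros HAB. unfold Jv.
  pose proof (int_ov _ _ _ _ _ _ A B HAB (ind_P H n) (ind_P H m)) as I1.
  pose proof (isR_scal _ _ _ (-1) _ (int_ov _ _ _ _ _ _ A B HAB (ind_P H n) (ind_Q H m))) as I2.
  pose proof (isR_scal _ _ _ (-1) _ (int_ov _ _ _ _ _ _ A B HAB (ind_Q H n) (ind_P H m))) as I3.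
  pose proof (int_ov _ _ _ _ _ _ A B HAB (ind_Q H n) (ind_Q H m)) as I4.
  pose proof (isR_plus _ _ _ _ _ _ (isR_plus _ _ _ _ _ _ (isR_plus _ _ _ _ _ _ I1 I2) I3) I4) as I.
  simpl in I.
  eapply isR_ext; [ | | exact I].
  intros x _; rewrite !phi_PQ; ring.
  lra.
Qed.

Ltac noMM t := lazymatch t with context[Rmax _ _] => fail | context[Rmin _ _] => fail | _ => idtac end.
Ltac elim1 := match goal with
 | |- context [Rmax ?a ?b] => noMM a; noMM b; destruct (Rle_dec a b);
      [rewrite (Rmax_right a b) by lra | rewrite (Rmax_left a b) by lra]
 | |- context [Rmin ?a ?b] => noMM a; noMM b; destruct (Rle_dec a b);
      [rewrite (Rmin_left a b) by lra | rewrite (Rmin_right a b) by lra]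
 end.
Ltac crush := unfold ov; repeat (elim1; try lra); try lra.

Lemma Jv_W A B H p q : 0 <= H -> A <= p - H -> p + H <= B -> Rabs (p - q) <= 2 * H ->
  Jv A B H p q = Rmax (2 * H - 3 * Rabs (p - q)) (Rabs (p - q) - 2 * H).
Proof.
  intros H0 HA HB Hd. unfold Jv.
  destruct (Rle_dec q p).
  - rewrite Rabs_right in Hd by lra. rewrite Rabs_right by lra.
    destruct (Rle_dec (p - q) H).
    + replace (ov A B (p - H) p (q - H) q) with (H - (p - q)) by crush.
      replace (ov A B (p - H) p q (q + H)) with (p - q) by crush.
      replace (ov A B p (p + H) (q - H) q) with 0 by crush.
      replace (ov A B p (p + H) q (q + H)) with (H - (p - q)) by crush.
      rewrite Rmax_left; lra.
    + replace (ov A B (p - H) p (q - H) q) with 0 by crush.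
      replace (ov A B (p - H) p q (q + H)) with (2 * H - (p - q)) by crush.
      replace (ov A B p (p + H) (q - H) q) with 0 by crush.
      replace (ov A B p (p + H) q (q + H)) with 0 by crush.
      rewrite Rmax_right; lra.
  - rewrite Rabs_left in Hd by lra. rewrite Rabs_left by lra.
    destruct (Rle_dec (q - p) H).
    + replace (ov A B (p - H) p (q - H) q) with (H - (q - p)) by crush.
      replace (ov A B (p - H) p q (q + H)) with 0 by crush.
      replace (ov A B p (p + H) (q - H) q) with (q - p) by crush.
      replace (ov A B p (p + H) q (q + H)) with (H - (q - p)) by crush.
      rewrite Rmax_left; lra.
    + replace (ov A B (p - H) p (q - H) q) with 0 by crush.
      replace (ov A B (p - H) p q (q + H)) with 0 by crush.
      replace (ov A B p (p + H) (q - H) q) with (2 * H - (q - p)) by crush.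
      replace (ov A B p (p + H) q (q + H)) with 0 by crush.
      rewrite Rmax_right; lra.
Qed.

Lemma ov_zero A B c1 d1 c2 d2 : Rmin (Rmin d1 d2) B <= Rmax (Rmax c1 c2) A -> ov A B c1 d1 c2 d2 = 0.
Proof. intros Hle. unfold ov. apply Rmax_left. lra. Qed.

Lemma ov_bnd A B c1 d1 c2 d2 : 0 <= ov A B c1 d1 c2 d2 <= Rmax 0 (d1 - c1).
Proof.
  unfold ov. split. apply Rmax_l.
  assert (Rmin (Rmin d1 d2) B <= d1) by (eapply Rle_trans; apply Rmin_l).
  assert (c1 <= Rmax (Rmax c1 c2) A) by (eapply Rle_trans; [apply Rmax_l|apply Rmax_l]).
  apply Rmax_lub. apply Rmax_l. eapply Rle_trans; [|apply Rmax_r]. lra.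
Qed.

Lemma Jv_bnd A B H p q : 0 <= H -> Rabs (Jv A B H p q) <= 4 * H.
Proof.
  intros H0. unfold Jv.
  pose proof (ov_bnd A B (p - H) p (q - H) q).
  pose proof (ov_bnd A B (p - H) p q (q + H)).
  pose proof (ov_bnd A B p (p + H) (q - H) q).
  pose proof (ov_bnd A B p (p + H) q (q + H)).
  rewrite !Rmax_right in * by lra. apply Rabs_le. lra.
Qed.

Lemma Jv_far A B H p q : 0 <= H -> 2 * H < Rabs (p - q) -> Jv A B H p q = 0.
Proof.
  intros H0 Hd. unfold Jv.
  destruct (Rle_dec q p).
  - rewrite Rabs_right in Hd by lra.
    rewrite !ov_zero by crush. lra.
  - rewrite Rabs_left in Hd by lra.
    rewrite !ov_zero by crush. lra.
Qed.

Lemma Jv_out A B H p q : 0 <= H -> B + H < p -> Jv A B H p q = 0.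
Proof.
  intros H0 Hd. unfold Jv. rewrite !ov_zero by crush. lra.
Qed.

Lemma INR_to_nat_ge z : IZR z <= INR (Z.to_nat z).
Proof.
  destruct (Z_le_dec 0 z).
  - rewrite INR_IZR_INZ, Z2Nat.id by auto. lra.
  - destruct z; try lia. rewrite Z2Nat.inj_neg. simpl. apply IZR_le. lia.
Qed.

Lemma window_eq f x H L : (S (Z.to_nat (up (x + H))) <= L)%nat ->
  window_sum f x H = sum_nat L (fun n => f n * phi H n x).
Proof.
  intros HL. unfold window_sum.
  replace L with (S (Z.to_nat (up (x + H))) + (L - S (Z.to_nat (up (x + H)))))%nat by lia.
  rewrite sum_nat_split.
  rewrite (sum_nat_zero (L - _)). rewrite Rplus_0_r.
  - apply sum_nat_ext. intros i _. unfold phi. destruct Rle_dec; ring.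
  - intros i _. unfold phi. destruct Rle_dec as [r|]; [|ring].
    exfalso. rewrite plus_INR, S_INR in r.
    pose proof (INR_to_nat_ge (up (x + H))). pose proof (pos_INR i).
    destruct (archimed (x + H)).
    apply Rabs_le_between in r. lra.
Qed.

Lemma isR_sum M (F : nat -> R -> R) v a b : (forall i, (i < M)%nat -> is_RInt (F i) a b (v i)) ->
  is_RInt (fun x => sum_nat M (fun i => F i x)) a b (sum_nat M v).
Proof.
  induction M; intros HF.
  - eapply isR_ext; [| |apply (isR_const a b 0)]. intros; rewrite sum_nat_0; reflexivity.
    rewrite sum_nat_0; lra.
  - eapply isR_ext; [| |apply isR_plus; [apply IHM|apply (HF M)]].
    intros; rewrite sum_nat_S; reflexivity. rewrite sum_nat_S; reflexivity.
    intros; apply HF; lia. lia.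
Qed.

Lemma sum_nat_mulr M (F : nat -> R) c : sum_nat M F * c = sum_nat M (fun i => F i * c).
Proof.
  rewrite Rmult_comm, <- sum_nat_scal. apply sum_nat_ext; intros; ring.
Qed.

Lemma Isym_eq f1 f2 N H L : H <= INR N ->
  (forall x, H < x < INR N -> (S (Z.to_nat (up (x + H))) <= L)%nat) ->
  Isym f1 f2 N H = sum_nat L (fun n => f1 n * sum_nat L (fun m => f2 m * Jv H (INR N) H (INR n) (INR m))).
Proof.
  intros HN HL. unfold Isym. apply is_RInt_unique.
  eapply isR_ext with (f := fun x => sum_nat L (fun n => f1 n * sum_nat L (fun m => f2 m * (phi H n x * phi H m x)))).
  - intros x Hx. rewrite Rmin_left in Hx by lra. rewrite Rmax_right in Hx by lra.
    rewrite (window_eq f1 x H L), (window_eq f2 x H L) by (apply HL; lra).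
    rewrite sum_nat_mulr. apply sum_nat_ext; intros n _.
    rewrite <- !sum_nat_scal. apply sum_nat_ext; intros; ring.
  - reflexivity.
  - apply isR_sum; intros n _. apply isR_scal. apply isR_sum; intros m _. apply isR_scal.
    apply J_int. exact HN.
Qed.

Definition cnd (N n : nat) (a : Z) : bool :=
  (Z.ltb (Z.abs a) (Z.of_nat n) && Z.leb (Z.of_nat n) (Z.of_nat N - Z.abs a))%bool.

Definition IM f2 N H F M n := sum_nat M (fun k =>
  if cnd N n (-F + Z.of_nat k)%Z then Wt H (-F + Z.of_nat k)%Z * f2 (Z.to_nat (Z.of_nat n - (-F + Z.of_nat k))) else 0).

Definition IJ f2 N H L n := sum_nat L (fun m => f2 m * Jv H (INR N) H (INR n) (INR m)).

Lemma sum_Z_eq lo hi G : sum_Z lo hi G = sum_nat (Z.to_nat (hi - lo + 1)) (fun k => G (lo + Z.of_nat k)%Z).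
Proof. reflexivity. Qed.

Lemma main_eq f1 f2 N H L : (S N <= L)%nat ->
  main_term f1 f2 N H = sum_nat L (fun n => f1 n * IM f2 N H (Int_part (2 * H))
     (Z.to_nat (Int_part (2 * H) - - Int_part (2 * H) + 1)) n).
Proof.
  intros HL. unfold main_term. rewrite sum_Z_eq.
  set (F := Int_part (2 * H)). set (M := Z.to_nat (F - - F + 1)).
  unfold Corr.
  rewrite (sum_nat_ext M _ (fun k => sum_nat (S N) (fun n => Wt H (- F + Z.of_nat k)%Z *
     (if cnd N n (- F + Z.of_nat k)%Z then f1 n * f2 (Z.to_nat (Z.of_nat n - (-F + Z.of_nat k))) else 0)))).
  2: { intros k _. rewrite <- sum_nat_scal. reflexivity. }
  rewrite sum_nat_swap.
  replace L with (S N + (L - S N))%nat by lia. rewrite sum_nat_split.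
  rewrite (sum_nat_zero (L - S N)). rewrite Rplus_0_r.
  - apply sum_nat_ext. intros n _. unfold IM. rewrite <- sum_nat_scal.
    apply sum_nat_ext. intros k _. destruct (cnd N n _); ring.
  - intros i _. unfold IM. rewrite sum_nat_zero. ring.
    intros k _. unfold cnd. replace (Z.of_nat (S N + i) <=? Z.of_nat N - Z.abs (- F + Z.of_nat k))%Z with false.
    rewrite Bool.andb_false_r. reflexivity.
    symmetry. apply Z.leb_gt. lia.
Qed.

Lemma sum_nat_const M c : sum_nat M (fun _ => c) = INR M * c.
Proof. induction M. rewrite sum_nat_0; simpl; ring. rewrite sum_nat_S, IHM, S_INR; ring. Qed.

Lemma Wt_bnd H a F : 0 <= H -> IZR F <= 2 * H -> (Z.abs a <= F)%Z -> Rabs (Wt H a) <= 4 * H.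
Proof.
  intros H0 HF Ha. unfold Wt.
  assert (Rabs (IZR a) <= 2 * H).
  { rewrite <- abs_IZR. eapply Rle_trans; [apply IZR_le; exact Ha| exact HF]. }
  pose proof (Rabs_pos (IZR a)).
  apply Rabs_le. split.
  - eapply Rle_trans; [|apply Rmax_r]. lra.
  - apply Rmax_lub; lra.
Qed.

Lemma IM_bnd f2 N H F Fn n B2 : 0 <= H -> IZR F <= 2 * H -> F = Z.of_nat Fn ->
  (forall j, (j <= N)%nat -> Rabs (f2 j) <= B2) ->
  Rabs (IM f2 N H F (2 * Fn + 1) n) <= INR (2 * Fn + 1) * (4 * H * B2).
Proof.
  intros H0 HF HFn Hf. unfold IM. rewrite <- sum_nat_const.
  apply sum_nat_abs_le. intros k Hk.
  destruct (cnd N n _) eqn:E.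
  - unfold cnd in E. apply andb_prop in E. destruct E as [E1 E2].
    apply Z.ltb_lt in E1. apply Z.leb_le in E2.
    rewrite Rabs_mult. apply Rmult_le_compat; try apply Rabs_pos.
    apply Wt_bnd with F; auto. lia.
    apply Hf. lia.
  - rewrite Rabs_R0. assert (0 <= B2) by (eapply Rle_trans; [apply Rabs_pos|apply (Hf O); lia]).
    nra.
Qed.

Lemma far_nat n m Fn H : 2 * H < INR Fn + 1 ->
  (m + Fn + 1 <= n \/ n + Fn + 1 <= m)%nat -> 2 * H < Rabs (INR n - INR m).
Proof.
  intros HF [E|E]; apply le_INR in E; rewrite !plus_INR in E; simpl in E; pose proof (pos_INR Fn).
  - rewrite Rabs_right by lra. lra.
  - rewrite Rabs_left by lra. lra.
Qed.

Lemma IJ_bnd f2 N H L Fn n B2 : 0 <= H -> 0 <= B2 -> 2 * H < INR Fn + 1 ->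
  (forall m, (m < L)%nat -> Rabs (f2 m) <= B2) ->
  Rabs (IJ f2 N H L n) <= INR (2 * Fn + 1) * (4 * H * B2).
Proof.
  intros H0 HB HF Hf. unfold IJ.
  eapply Rle_trans.
  apply sum_nat_abs_le with (E := fun m => 4 * H * B2 * wind (n - Fn) (2 * Fn + 1) m).
  - intros m Hm. unfold wind. destruct (andb _ _) eqn:E.
    + rewrite Rabs_mult, Rmult_1_r. rewrite (Rmult_comm (4 * H)).
      apply Rmult_le_compat; try apply Rabs_pos. apply Hf; auto. apply Jv_bnd; auto.
    + rewrite Jv_far; auto. rewrite Rmult_0_r, Rabs_R0. lra.
      apply far_nat with Fn; auto.
      apply Bool.andb_false_iff in E; destruct E as [E|E];
        [apply Nat.leb_gt in E | apply Nat.ltb_ge in E]; lia.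
  - rewrite sum_nat_scal. rewrite Rmult_comm.
    apply Rmult_le_compat_r. nra. apply sum_wind_le.
Qed.

Lemma good_eq f2 N H L Fn n : 1 <= H -> INR Fn <= 2 * H -> 2 * H < INR Fn + 1 ->
  (Fn + 1 <= n)%nat -> (n + Fn <= N)%nat -> (N + 1 <= L)%nat ->
  IJ f2 N H L n = IM f2 N H (Z.of_nat Fn) (2 * Fn + 1) n.
Proof.
  intros H1 HF1 HF2 Hn1 Hn2 HL. unfold IJ.
  replace L with ((n - Fn) + ((2 * Fn + 1) + (L - (n + Fn + 1))))%nat by lia.
  rewrite sum_nat_split, (sum_nat_split (2 * Fn + 1)).
  rewrite (sum_nat_zero (n - Fn)).
  2: { intros i Hi. rewrite Jv_far. ring. lra. apply far_nat with Fn; auto. lia. }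
  rewrite (sum_nat_zero (L - _)).
  2: { intros i Hi. rewrite Jv_far. ring. lra. apply far_nat with Fn; auto. lia. }
  rewrite Rplus_0_l, Rplus_0_r.
  rewrite sum_nat_rev. unfold IM. apply sum_nat_ext. intros k Hk.
  replace (cnd N n (- Z.of_nat Fn + Z.of_nat k)%Z) with true.
  2: { symmetry. unfold cnd. apply andb_true_intro. split.
       apply Z.ltb_lt; lia. apply Z.leb_le; lia. }
  set (m' := (n - Fn + (2 * Fn + 1 - 1 - k))%nat).
  replace (Z.to_nat (Z.of_nat n - (- Z.of_nat Fn + Z.of_nat k))) with m'.
  2: { replace (Z.of_nat n - (- Z.of_nat Fn + Z.of_nat k))%Z with (Z.of_nat m') by (unfold m'; lia).
       symmetry; apply Nat2Z.id. }
  assert (Hd : INR n - INR m' = IZR (- Z.of_nat Fn + Z.of_nat k)).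
  { rewrite !INR_IZR_INZ, <- minus_IZR. f_equal. unfold m'. lia. }
  assert (Hk' : (k <= 2 * Fn)%nat) by lia.
  assert (Habs : Rabs (INR n - INR m') <= 2 * H).
  { rewrite Hd, <- abs_IZR. eapply Rle_trans; [|exact HF1].
    rewrite INR_IZR_INZ. apply IZR_le. lia. }
  rewrite Jv_W; try lra.
  - rewrite Rmult_comm. unfold Wt. rewrite Hd. reflexivity.
  - apply le_INR in Hn1. rewrite plus_INR in Hn1. simpl in Hn1. lra.
  - apply le_INR in Hn2. rewrite plus_INR in Hn2. lra.
Qed.

Lemma core f1 f2 N H B1 B2 :
  1 <= H -> 8 * H <= INR N -> (2 <= N)%nat ->
  (forall n, INR n <= 5 * INR N -> Rabs (f1 n) <= B1) ->
  (forall n, INR n <= 5 * INR N -> Rabs (f2 n) <= B2) ->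
  Rabs (Isym f1 f2 N H - main_term f1 f2 N H) <= 480 * B1 * B2 * H ^ 3.
Proof.
  intros H1 HN N2 Hf1 Hf2.
  assert (HN2 : 2 <= INR N) by (apply le_INR in N2; simpl in N2; lra).
  assert (B1p : 0 <= B1) by (eapply Rle_trans; [apply Rabs_pos|apply (Hf1 O)]; simpl; lra).
  assert (B2p : 0 <= B2) by (eapply Rle_trans; [apply Rabs_pos|apply (Hf2 O)]; simpl; lra).
  destruct (base_Int_part (2 * H)) as [HF1 HF2].
  set (F := Int_part (2 * H)) in *.
  assert (F0 : (0 <= F)%Z) by (apply le_IZR; lra).
  set (Fn := Z.to_nat F).
  assert (HFn : F = Z.of_nat Fn) by (unfold Fn; rewrite Z2Nat.id; auto).
  assert (HFr : INR Fn = IZR F) by (rewrite HFn, INR_IZR_INZ; reflexivity).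
  assert (HM : Z.to_nat (F - - F + 1) = (2 * Fn + 1)%nat).
  { replace (F - - F + 1)%Z with (Z.of_nat (2 * Fn + 1)) by lia. apply Nat2Z.id. }
  destruct (archimed H) as [HU1 HU2].
  assert (U0 : (0 <= up H)%Z) by (apply le_IZR; lra).
  set (U := Z.to_nat (up H)).
  assert (HUr : INR U = IZR (up H)) by (unfold U; rewrite INR_IZR_INZ, Z2Nat.id; auto).
  set (L := (N + 3 * U + 2)%nat).
  assert (HLr : INR L = INR N + 3 * INR U + 2) by (unfold L; rewrite !plus_INR, mult_INR; simpl; ring).
  assert (HL5 : forall m, (m < L)%nat -> INR m <= 5 * INR N).
  { intros m Hm. apply lt_INR in Hm. lra. }
  assert (FnN : (Fn <= N)%nat) by (apply INR_le; lra).
  assert (Hwin : forall x, H < x < INR N -> (S (Z.to_nat (up (x + H))) <= L)%nat).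
  { intros x Hx. destruct (archimed (x + H)) as [A1 A2].
    assert (up (x + H) < Z.of_nat (N + U) + 1)%Z.
    { apply lt_IZR. rewrite plus_IZR, <- INR_IZR_INZ, plus_INR. simpl. lra. }
    unfold L. lia. }
  rewrite (Isym_eq f1 f2 N H L) by (auto; lra).
  rewrite (main_eq f1 f2 N H L) by (unfold L; lia).
  fold F. rewrite HM. rewrite HFn.
  change (sum_nat L (fun n => f1 n * sum_nat L (fun m => f2 m * Jv H (INR N) H (INR n) (INR m))))
    with (sum_nat L (fun n => f1 n * IJ f2 N H L n)).
  rewrite <- sum_nat_minus.
  set (c := INR (2 * Fn + 1) * (4 * H * B2)).
  assert (c0 : 0 <= c) by (unfold c; pose proof (pos_INR (2 * Fn + 1)); apply Rmult_le_pos; nra).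
  set (s2 := (N - Fn + 1)%nat).
  eapply Rle_trans.
  apply sum_nat_abs_le with (E := fun n => 2 * B1 * c * (wind 0 (Fn + 1) n + wind s2 (L - s2) n)).
  - intros n Hn.
    pose proof (wind_ge0 0 (Fn + 1) n). pose proof (wind_ge0 s2 (L - s2) n).
    destruct (le_lt_dec (Fn + 1) n) as [G1|G1]; [destruct (le_lt_dec (n + Fn) N) as [G2|G2]|].
    + rewrite (good_eq f2 N H L Fn n); auto; try lra. rewrite Rminus_diag, Rabs_R0.
      apply Rmult_le_pos; [nra|lra]. unfold L; lia.
    + assert (W : wind s2 (L - s2) n = 1).
      { unfold wind. replace (andb _ _) with true. reflexivity. symmetry.
        apply andb_true_intro; split; [apply Nat.leb_le|apply Nat.ltb_lt]; unfold s2, L in *; lia. }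
      rewrite W. rewrite <- Rmult_minus_distr_l, Rabs_mult.
      eapply Rle_trans. apply Rmult_le_compat. apply Rabs_pos. apply Rabs_pos.
      apply Hf1; apply HL5; auto.
      eapply Rle_trans. apply Rabs_triang. rewrite Rabs_Ropp.
      apply Rplus_le_compat.
      apply IJ_bnd; auto; try lra. rewrite HFr; lra.
      apply IM_bnd; auto; try lra. rewrite <- HFn; lra.
      intros j Hj. apply Hf2. apply le_INR in Hj. lra.
      assert (0 <= B1 * c * wind 0 (Fn + 1) n) by (apply Rmult_le_pos; [apply Rmult_le_pos|]; auto).
      fold c. lra.
    + assert (W : wind 0 (Fn + 1) n = 1).
      { unfold wind. replace (andb _ _) with true. reflexivity. symmetry.
        apply andb_true_intro; split; [apply Nat.leb_le|apply Nat.ltb_lt]; lia. }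
      rewrite W. rewrite <- Rmult_minus_distr_l, Rabs_mult.
      eapply Rle_trans. apply Rmult_le_compat. apply Rabs_pos. apply Rabs_pos.
      apply Hf1; apply HL5; auto.
      eapply Rle_trans. apply Rabs_triang. rewrite Rabs_Ropp.
      apply Rplus_le_compat.
      apply IJ_bnd; auto; try lra. rewrite HFr; lra.
      apply IM_bnd; auto; try lra. rewrite <- HFn; lra.
      intros j Hj. apply Hf2. apply le_INR in Hj. lra.
      assert (0 <= B1 * c * wind s2 (L - s2) n) by (apply Rmult_le_pos; [apply Rmult_le_pos|]; auto).
      fold c. lra.
  - rewrite sum_nat_scal, sum_nat_plus.
    pose proof (sum_wind_le L 0 (Fn + 1)). pose proof (sum_wind_le L s2 (L - s2)).
    assert (E1 : INR (Fn + 1) <= 2 * H + 1) by (rewrite plus_INR; simpl; lra).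
    assert (E2 : INR (L - s2) <= 5 * H + 4).
    { replace (L - s2)%nat with (3 * U + 1 + Fn)%nat by (unfold L, s2; lia).
      rewrite !plus_INR, mult_INR. simpl. lra. }
    assert (E3 : c <= 20 * H ^ 2 * B2).
    { unfold c. assert (X : INR (2 * Fn + 1) <= 5 * H).
      { rewrite plus_INR, mult_INR. replace (INR 2) with 2 by (simpl; lra). simpl. lra. }
      apply Rle_trans with (5 * H * (4 * H * B2)).
      apply Rmult_le_compat_r; [nra|exact X]. right; ring. }
    assert (sum_nat L (wind 0 (Fn + 1)) + sum_nat L (wind s2 (L - s2)) <= 12 * H) by lra.
    assert (0 <= sum_nat L (wind 0 (Fn + 1)) + sum_nat L (wind s2 (L - s2))).
    { rewrite !sum_wind. pose proof (pos_INR (Nat.min L (0 + (Fn + 1)) - 0)).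
      pose proof (pos_INR (Nat.min L (s2 + (L - s2)) - s2)). lra. }
    apply Rle_trans with (2 * B1 * (20 * H ^ 2 * B2) * (12 * H)).
    apply Rmult_le_compat; try lra. apply Rmult_le_pos; lra.
    apply Rmult_le_compat_l; lra.
    right; ring.
Qed.

Theorem lemma1 (h : nat -> R) (f1 f2 : nat -> R)
  (h_infty : forall M : R, exists N0 : nat, forall N : nat, (N0 <= N)%nat -> M <= h N)
  (h_small : forall c : R, 0 < c -> exists N0 : nat, forall N : nat, (N0 <= N)%nat ->
               Rabs (h N) <= c * INR N)
  (Hf1 : small_growth f1) (Hf2 : small_growth f2) :
  forall eps : R, 0 < eps ->
    exists K : R, exists N0 : nat, forall N : nat, (1 <= N)%nat -> (N0 <= N)%nat ->
      Rabs (Isym f1 f2 N (h N) - main_term f1 f2 N (h N))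
        <= K * Rpower (INR N) eps * (h N) ^ 3.
Proof.
  intros eps Heps.
  destruct (Hf1 (eps / 2) 5) as [K1 HK1]; try lra.
  destruct (Hf2 (eps / 2) 5) as [K2 HK2]; try lra.
  destruct (h_infty 1) as [N1 HN1].
  destruct (h_small (1 / 8)) as [N2 HN2]; try lra.
  exists (480 * K1 * K2), (Nat.max (Nat.max N1 N2) 2).
  intros N HN HN0.
  assert (Hp : Rpower (INR N) eps = Rpower (INR N) (eps / 2) * Rpower (INR N) (eps / 2)).
  { rewrite <- Rpower_plus. f_equal. lra. }
  rewrite Hp.
  replace (480 * K1 * K2 * (Rpower (INR N) (eps / 2) * Rpower (INR N) (eps / 2)) * h N ^ 3)
    with (480 * (K1 * Rpower (INR N) (eps / 2)) * (K2 * Rpower (INR N) (eps / 2)) * h N ^ 3) by ring.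
  apply core.
  - apply HN1. lia.
  - assert (Rabs (h N) <= 1 / 8 * INR N) by (apply HN2; lia).
    pose proof (Rle_abs (h N)). lra.
  - lia.
  - intros n Hn. apply HK1; auto.
  - intros n Hn. apply HK2; auto.
Qed.
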